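(* Let $K\ge 2$, $i\in[K]$, and let $(G_{ij})_{j\in[K]\setminus\{i\}}$ be integrable real random variables on a probability space, with $G:=\min_{j\ne i}G_{ij}$. Let $L\ge 1$ and let $q\sim\mathrm{Ber}(1/L)$ be independent of $(G_{ij})_j$. Define the event $E=\{G>0\}\cup\{G\le 0,\ q=1\}$. Then for every $j\ne i$, $$\mathbb E[G_{ij}\mathbb 1_E]=\Big(1-\frac1L\Big)\mathbb E[G_{ij}\mathbb 1_{\{G>0\}}]+\frac1L\,\mathbb E[G_{ij}].$$ Moreover, let $\epsilon\in[0,1)$, $\tau,\rho>0$, and suppose $\Pr(G\ge\tau)\ge\rho$ and $\mathbb E[G_{ij}]\ge -1$ for all $j\ne i$. If $$L\ge 1+\frac{1-\epsilon}{\tau\rho+\epsilon},$$ then $\mathbb E[G_{ij}\mathbb 1_E]\ge-\epsilon$ for every $j\neq i$.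
   Context: $\mathrm{Ber}(1/L)$ is the Bernoulli distribution with success probability $1/L$; $\mathbb 1_E$ is the indicator of the event $E$. *)

(* Defs.v *)
From mathcomp Require Import all_boot all_order all_algebra.
From mathcomp Require Import all_classical all_reals all_analysis.
Set Implicit Arguments. Unset Strict Implicit. Unset Printing Implicit Defensive.
Import Order.TTheory GRing.Theory Num.Theory.
Local Open Scope classical_set_scope.
Local Open Scope ring_scope.

(* G(w) := min_{j <> i} X_j(w)  (computed in \bar R with neutral +oo; the
   index set is nonempty when K >= 2, so the result is a real number). *)
Definition Gmin (R : realType) (T : Type) (K : nat) (i : 'I_K)
  (X : 'I_K -> T -> R) (w : T) : R :=
  fine (\big[mine/+oo%E]_(j < K | j != i) (X j w)%:E).

Definition sigma_family d (T : measurableType d) (R : realType) (K : nat)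
  (i : 'I_K) (X : 'I_K -> T -> R) : set (set T) :=
  <<s setT, \bigcup_(j in [set j : 'I_K | j != i])
              preimage_set_system setT (X j) measurable >>.

Definition indep_bool_sigma d (T : measurableType d) (R : realType)
  (P : probability T R) (q : T -> bool) (F : set (set T)) : Prop :=
  forall (b : bool) (B : set T), F B ->
    P ([set w | q w = b] `&` B) = (P [set w | q w = b] * P B)%E.

Definition Eevent (R : realType) (T : Type) (K : nat) (i : 'I_K)
  (X : 'I_K -> T -> R) (q : T -> bool) : set T :=
  [set w | 0 < Gmin i X w] `|` [set w | Gmin i X w <= 0 /\ q w].

(* Main.v *)
Require Import Defs.
From mathcomp Require Import all_boot all_order all_algebra.
From mathcomp Require Import all_classical all_reals all_analysis.
From mathcomp Require Import measurable_realfun ring lra.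
Import Order.TTheory GRing.Theory Num.Theory.
Local Open Scope classical_set_scope.
Local Open Scope ring_scope.

Lemma exists_neq (K : nat) (i : 'I_K) : (2 <= K)%N -> exists j : 'I_K, j != i.
Proof.
case: K i => [|[|K]] i // _.
case: (eqVneq i ord0) => [->|h]; last by exists ord0; rewrite eq_sym.
by exists ord_max.
Qed.

Lemma Gmin_spec (R : realType) (T : Type) (K : nat) (i : 'I_K)
  (Y : 'I_K -> T -> R) (w : T) : (2 <= K)%N ->
  (exists2 k, k != i & Gmin i Y w = Y k w) /\
  (forall k, k != i -> Gmin i Y w <= Y k w).
Proof.
move=> K2; have [j ji] := @exists_neq K i K2.
have [k0 k0i hk0] := eq_bigmin (x := +oo%E) j (fun j => j != i)
   (fun j => (Y j w)%:E) ji (fun _ _ => leey _).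
rewrite /Gmin hk0 /=; split; first by exists k0.
move=> k ki; rewrite -lee_fin -hk0.
exact: bigmin_le_cond.
Qed.

Section gmeas.
Context (R : realType) (K : nat) (i : 'I_K) (K2 : (2 <= K)%N).

Lemma Gmin_gtE (T : Type) (Y : 'I_K -> T -> R) (c : R) :
  [set w | c < Gmin i Y w] = \bigcap_(k in [set k | k != i]) [set w | c < Y k w].
Proof.
apply/seteqP; split => w /=.
  move=> cG k /= ki; have [_ h] := @Gmin_spec _ _ _ i Y w K2.
  exact: lt_le_trans cG (h k ki).
move=> h; have [[k ki ->] _] := @Gmin_spec _ _ _ i Y w K2; exact: h.
Qed.

Lemma Gmin_geE (T : Type) (Y : 'I_K -> T -> R) (c : R) :
  [set w | c <= Gmin i Y w] = \bigcap_(k in [set k | k != i]) [set w | c <= Y k w].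
Proof.
apply/seteqP; split => w /=.
  move=> cG k /= ki; have [_ h] := @Gmin_spec _ _ _ i Y w K2.
  exact: le_trans cG (h k ki).
move=> h; have [[k ki ->] _] := @Gmin_spec _ _ _ i Y w K2; exact: h.
Qed.

Lemma Gmin_gt_meas d (T : measurableType d) (Y : 'I_K -> T -> R) (c : R) :
  (forall k, k != i -> measurable_fun setT (Y k)) ->
  measurable [set w | c < Gmin i Y w].
Proof.
move=> mY; rewrite Gmin_gtE; apply: fin_bigcap_measurable.
  exact: finite_finset.
move=> k /= ki; rewrite -[X in measurable X]setTI.
have -> : [set w | c < Y k w] = Y k @^-1` `]c, +oo[.
  by apply/seteqP; split => w /=; rewrite in_itv /= andbT.
exact: (mY k ki) _ (measurable_itv _).
Qed.

Lemma Gmin_ge_meas d (T : measurableType d) (Y : 'I_K -> T -> R) (c : R) :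
  (forall k, k != i -> measurable_fun setT (Y k)) ->
  measurable [set w | c <= Gmin i Y w].
Proof.
move=> mY; rewrite Gmin_geE; apply: fin_bigcap_measurable.
  exact: finite_finset.
move=> k /= ki; rewrite -[X in measurable X]setTI.
have -> : [set w | c <= Y k w] = Y k @^-1` `[c, +oo[.
  by apply/seteqP; split => w /=; rewrite in_itv /= andbT.
exact: (mY k ki) _ (measurable_itv _).
Qed.

End gmeas.
Section key.
Context d (T : measurableType d) (R : realType) (P : probability T R).
Variables (Q : set T) (mQ : measurable Q) (p : R) (p0 : 0 <= p).

Let Dp := [set y : R | 0 < y].
Let mDp : measurable Dp.
Proof.
have -> : Dp = `]0, +oo[%classic by apply/seteqP; split => y /=; rewrite in_itv/= andbT.
exact: measurable_itv.
Qed.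

Let restrD (g : T -> R) : (forall w, 0 <= g w) ->
  (\int[P]_w (g w)%:E = \int[P]_(w in g @^-1` Dp) (g w)%:E)%E.
Proof.
move=> g0; rewrite [RHS]integral_mkcond; apply: eq_integral => w _.
rewrite /patch; case: ifPn => // /negP; rewrite inE /Dp /= => h.
by have -> : g w = 0 by apply/eqP; rewrite eq_le g0 andbT leNgt; apply/negP.
Qed.

Lemma indep_ge0 (f : T -> R) : measurable_fun setT f -> (forall w, 0 <= f w) ->
  (forall S, measurable S -> P (Q `&` f @^-1` S) = (p%:E * P (f @^-1` S))%E) ->
  (\int[P]_w (f w * \1_Q w)%:E = p%:E * \int[P]_w (f w)%:E)%E.
Proof.
move=> mf f0 H.
pose phi w := f w * \1_Q w.
have mphi : measurable_fun setT phi.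
  by apply: measurable_funM => //; exact: measurable_indic.
have phi0 w : 0 <= phi w by rewrite /phi mulr_ge0// indicE.
have mE : measurable_fun Dp (EFin : R -> \bar R).
  exact/measurable_EFinP/measurable_id.
have E0 : {in Dp, forall y : R, (0 <= y%:E)%E}.
  by move=> y; rewrite inE /Dp /= lee_fin => /ltW.
rewrite (restrD phi phi0) -[LHS](ge0_integral_pushforward mphi P mDp mE E0).
rewrite (eq_measure_integral (mscale (NngNum p0) (pushforward P f))); last first.
  move=> A mA AD; rewrite /pushforward /mscale /=.
  rewrite /mscale /= -H//; congr (P _); apply/seteqP; split => w /=.
    rewrite /phi indicE; case: (boolP (w \in Q)) => [/set_mem wQ|_].
      by rewrite mulr1.
    by rewrite mulr0 => /AD; rewrite /Dp /= ltxx.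
  by move=> [wQ fA]; rewrite /phi indicE mem_set// mulr1.
rewrite ge0_integral_mscale//; last by move=> y; rewrite /Dp /= lee_fin => /ltW.
by rewrite (ge0_integral_pushforward mf P mDp mE E0) -(restrD f f0).
Qed.

Lemma indep_int (f : T -> R) : measurable_fun setT f ->
  P.-integrable setT (EFin \o f) ->
  (forall S, measurable S -> P (Q `&` f @^-1` S) = (p%:E * P (f @^-1` S))%E) ->
  (\int[P]_w (f w * \1_Q w)%:E = p%:E * \int[P]_w (f w)%:E)%E.
Proof.
move=> mf fi H.
have Hc (g : R -> R) : measurable_fun setT g -> forall S, measurable S ->
    P (Q `&` (g \o f) @^-1` S) = (p%:E * P ((g \o f) @^-1` S))%E.
  move=> mg S mS.
  have mgS : measurable (g @^-1` S) by rewrite -[X in measurable X]setTI; exact: mg.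
  exact: (H _ mgS).
have mp : measurable_fun setT (fun x : R => Num.max x 0).
  have := @measurable_maxr _ _ R setT (idfun : R -> R) (cst 0) (@measurable_id _ _ setT) (measurable_cst _).
  by [].
have mn : measurable_fun setT (fun x : R => Num.max (- x) 0).
  have := @measurable_maxr _ _ R setT (fun x : R => - x) (cst 0)
    (measurable_funN (@measurable_id _ _ setT)) (measurable_cst _).
  by [].
have ip (g : T -> R) : (forall x, `|g x| <= `|f x|) -> measurable_fun setT g ->
    P.-integrable setT (EFin \o g).
  move=> hg mg; apply: le_integrable fi => //; first exact/measurable_EFinP.
  by move=> x _ /=; rewrite lee_fin.
have mfp : measurable_fun setT f^\+ by exact: measurable_funrpos.
have mfn : measurable_fun setT f^\- by exact: measurable_funrneg.
have hp x : `|f^\+ x| <= `|f x|.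
  by rewrite ger0_norm ?funrpos_ge0// /funrpos ge_max normr_ge0 andbT ler_norm.
have hn x : `|f^\- x| <= `|f x|.
  rewrite ger0_norm ?funrneg_ge0// /funrneg ge_max normr_ge0 andbT.
  by rewrite -normrN ler_norm.
have mQi : measurable_fun setT (\1_Q : T -> R) by exact: measurable_indic.
have hQ (g : T -> R) x : `|g x * \1_Q x| <= `|g x|.
  by rewrite normrM indicE; case: (_ \in _); rewrite ?normr1 ?normr0 ?mulr1 ?mulr0.
have ipQ : P.-integrable setT (EFin \o (fun w => f^\+ w * \1_Q w)).
  apply: ip; last exact: measurable_funM.
  by move=> x; apply: le_trans (hQ _ x) (hp x).
have inQ : P.-integrable setT (EFin \o (fun w => f^\- w * \1_Q w)).
  apply: ip; last exact: measurable_funM.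
  by move=> x; apply: le_trans (hQ _ x) (hn x).
have ipp : P.-integrable setT (EFin \o f^\+) by exact: ip.
have inn : P.-integrable setT (EFin \o f^\-) by exact: ip.
have fE x : f x = f^\+ x - f^\- x.
  by have := congr1 (fun h => h x) (funrposBneg f) => /= <-.
transitivity (\int[P]_w ((f^\+ w * \1_Q w)%:E - (f^\- w * \1_Q w)%:E))%E.
  by apply: eq_integral => w _; rewrite -EFinB -mulrBl -fE.
rewrite integralB_EFin// (@indep_ge0 f^\+ mfp (@funrpos_ge0 _ _ f) (Hc _ mp)).
rewrite (@indep_ge0 f^\- mfn (@funrneg_ge0 _ _ f) (Hc _ mn)).
rewrite -muleBr//; last first.
  exact/fin_num_adde_defr/integrable_fin_num.
rewrite -integralB_EFin//; congr (_ * _)%E.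
by apply: eq_integral => w _; rewrite -EFinB -fE.
Qed.

End key.


Theorem mainTheorem8 (d : measure_display) (T : measurableType d)
  (R : realType) (P : probability T R) (K : nat) (i : 'I_K)
  (X : 'I_K -> {RV P >-> R}) (q : T -> bool) (L : R) :
  (2 <= K)%N ->
  (forall j, j != i -> P.-integrable setT (EFin \o X j)) ->
  1 <= L ->
  measurable_fun setT q ->
  P [set w | q w] = (L^-1)%:E ->
  indep_bool_sigma P q (sigma_family i (fun j => (X j : T -> R))) ->
  (forall j, j != i ->
     (\int[P]_w ((X j w) * \1_(Eevent i (fun j => (X j : T -> R)) q) w)%R%:E =
       ((1 - L^-1)%:E *
          \int[P]_w ((X j w) * \1_[set w | (0 < Gmin i (fun j => (X j : T -> R)) w)%R] w)%R%:E
        + (L^-1)%:E * 'E_P[X j]))%E) /\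
  (forall eps tau rho : R,
     0 <= eps -> eps < 1 -> 0 < tau -> 0 < rho ->
     (rho%:E <= P [set w | (tau <= Gmin i (fun j => (X j : T -> R)) w)%R])%E ->
     (forall j, j != i -> (-1)%:E <= 'E_P[X j])%E ->
     1 + (1 - eps) / (tau * rho + eps) <= L ->
     forall j, j != i ->
       ((- eps)%:E <=
          \int[P]_w ((X j w) * \1_(Eevent i (fun j => (X j : T -> R)) q) w)%R%:E)%E).
Proof.
move=> K2 Xint L1 mq PQ Hind.
set Xf := (fun j => (X j : T -> R)).
set Q := [set w | q w].
have mQ : measurable Q.
  have := mq measurableT [set true] (measurableT : measurable [set: bool]).
  by rewrite setTI.
set p := L^-1.
have L0 : 0 < L by apply: lt_le_trans L1.
have p0 : 0 <= p by rewrite invr_ge0 ltW.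
set Gp := [set w | 0 < Gmin i Xf w].
have mX k : measurable_fun setT (Xf k) by exact: measurable_funP.
have mGp : measurable Gp by apply: Gmin_gt_meas => // k _.
set An := ~` Gp.
have mAn : measurable An by exact: measurableC.
have XSint j (S : set T) : j != i -> measurable S ->
    P.-integrable setT (EFin \o (fun w => Xf j w * \1_S w)).
  move=> ji mS; apply: le_integrable (Xint j ji) => //.
    by apply/measurable_EFinP/measurable_funM => //; exact: measurable_indic.
  move=> x _ /=; rewrite lee_fin normrM indicE.
  by case: (_ \in _); rewrite ?normr1 ?normr0 ?mulr1 ?mulr0.
have part1 j : j != i ->
    (\int[P]_w ((Xf j w) * \1_(Eevent i Xf q) w)%R%:E =
       ((1 - p)%:E * \int[P]_w ((Xf j w) * \1_Gp w)%R%:E + p%:E * 'E_P[X j]))%E.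
  move=> ji.
  set f1 := fun w => Xf j w * \1_Gp w.
  set f2 := fun w => Xf j w * \1_An w.
  have i1 : P.-integrable setT (EFin \o f1) := XSint j Gp ji mGp.
  have i2 : P.-integrable setT (EFin \o f2) := XSint j An ji mAn.
  have mf2 : measurable_fun setT f2.
    by apply: measurable_funM => //; exact: measurable_indic.
  have i3 : P.-integrable setT (EFin \o (fun w => f2 w * \1_Q w)).
    apply: le_integrable i2 => //.
      by apply/measurable_EFinP/measurable_funM => //; exact: measurable_indic.
    move=> x _ /=; rewrite lee_fin normrM indicE.
    by case: (_ \in _); rewrite ?normr1 ?normr0 ?mulr1 ?mulr0.
  have hE w : \1_(Eevent i Xf q) w = \1_Gp w + \1_An w * \1_Q w :> R.
    rewrite /Eevent !indicE; have [h|h] := ltP 0 (Gmin i Xf w).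
      rewrite mem_set; last by left.
      rewrite (mem_set (h : Gp w)) memNset; last by move=> /(_ h).
      by rewrite mul0r addr0.
    have nG : ~ Gp w by move=> hw; have := lt_le_trans hw h; rewrite ltxx.
    rewrite (memNset nG) (mem_set (nG : An w)).
    rewrite add0r mul1r.
    case: (boolP (w \in Q)) => [/set_mem wQ|/negP wQ].
      by rewrite mem_set//; right.
    rewrite memNset// => -[//|[_ qw]].
    by apply: wQ; rewrite inE.
  have hX w : Xf j w = f1 w + f2 w.
    rewrite /f1 /f2 -mulrDr !indicE.
    case: (boolP (w \in Gp)) => [/set_mem wG|/negP wG].
      by rewrite (memNset (fun h : An w => h wG)) addr0 mulr1.
    have nG : ~ Gp w by move=> hw; apply: wG; rewrite inE.
    by rewrite (mem_set (nG : An w)) add0r mulr1.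
  have eq1 : (\int[P]_w ((Xf j w) * \1_(Eevent i Xf q) w)%:E =
      \int[P]_w (((EFin \o f1) \+ (EFin \o (fun w => (f2 w * \1_Q w)%R))) w))%E.
    apply: eq_integral => w _ /=; rewrite hE /f1 /f2.
    by rewrite mulrDr mulrA.
  have eq2 : ('E_P[X j] = \int[P]_w (((EFin \o f1) \+ (EFin \o f2)) w))%E.
    rewrite unlock; apply: eq_integral => w _ /=.
    by rewrite -EFinD -hX.
  rewrite eq1 eq2 !integralD_EFin//.
  have H2 : forall S, measurable S ->
      P (Q `&` f2 @^-1` S) = (p%:E * P (f2 @^-1` S))%E.
    pose U := \bigcup_(k in [set k : 'I_K | k != i])
                 preimage_set_system setT (Xf k) measurable.
    pose Tg := g_sigma_algebraType U.
    have mXg k : k != i -> measurable_fun (setT : set Tg) (Xf k : Tg -> R).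
      move=> ki _ S mS; apply: sub_sigma_algebra; exists k => //.
      by exists S.
    have mGpg : measurable (Gp : set Tg).
      exact: (@Gmin_gt_meas R K i K2 _ Tg Xf 0 mXg).
    have mf2g : measurable_fun (setT : set Tg) (f2 : Tg -> R).
      apply: measurable_funM; first exact: mXg.
      exact/measurable_indic/measurableC.
    move=> S mS.
    have hS : sigma_family i Xf (f2 @^-1` S).
      by have := mf2g measurableT S mS; rewrite setTI.
    by rewrite (Hind true _ hS) PQ.
  have := @indep_int _ _ _ P Q mQ p p0 f2 mf2 i2 H2.
  rewrite /= => ->.
  have fin1 := integrable_fin_num measurableT i1.
  have fin2 := integrable_fin_num measurableT i2.
  rewrite -(fineK fin1) -(fineK fin2) /=.
  rewrite -!EFinM -!EFinD; congr (_%:E); ring.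
split; first exact: part1.
move=> eps tau rho e0 e1 t0 r0 Hrho HE HL j ji.
rewrite part1//.
have iA := XSint j Gp ji mGp.
have fina := integrable_fin_num measurableT iA.
have fine_ : ('E_P[X j])%E \is a fin_num.
  by rewrite unlock; exact: (integrable_fin_num measurableT (Xint j ji)).
set a := (\int[P]_w _)%E in fina *.
set Gt := [set w | tau <= Gmin i Xf w].
have mGt : measurable Gt by apply: Gmin_ge_meas => // k _.
have ha : ((tau * rho)%:E <= a)%E.
  have h1 : ((tau * rho)%:E <= tau%:E * P Gt)%E.
    by rewrite EFinM; apply: lee_wpmul2l => //; rewrite lee_fin ltW.
  apply: (le_trans h1).
  have -> : (tau%:E * P Gt = \int[P]_w (tau%:E * (\1_Gt w)%:E))%E.
    rewrite ge0_integralZl_EFin ?ltW//.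
    all: try (by rewrite integral_indic// setIT).
    exact/measurable_EFinP/measurable_indic.
  apply: ge0_le_integral => //.
  - move=> x _; rewrite -EFinM lee_fin; apply: mulr_ge0; first exact: ltW.
    by rewrite indicE ler0n.
  - apply: emeasurable_funM => //; exact/measurable_EFinP/measurable_indic.
  - apply/measurable_EFinP/measurable_funM => //; exact: measurable_indic.
  - move=> x _; rewrite -EFinM lee_fin !indicE.
    have [[k ki Gk] Gle] := @Gmin_spec _ _ _ i Xf x K2.
    case: (boolP (x \in Gt)) => [/set_mem xG|_]; last first.
      rewrite mulr0; case: (boolP (x \in Gp)) => [/set_mem xp|_].
        by rewrite mulr1; exact: ltW (lt_le_trans xp (Gle j ji)).
      by rewrite mulr0.
    rewrite mem_set; last by rewrite /Gp /=; exact: lt_le_trans t0 xG.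
    by rewrite !mulr1; exact: le_trans xG (Gle j ji).
rewrite -(fineK fina) -(fineK fine_) -!EFinM -EFinD lee_fin.
have hA : tau * rho <= fine a by rewrite -lee_fin fineK.
have hEj : -1 <= fine ('E_P[X j])%E by rewrite -lee_fin fineK// HE.
move: (fine a) (fine ('E_P[X j])%E) hA hEj => A E hA hEj.
have c0 : 0 < tau * rho + eps by rewrite ltr_pwDl// mulr_gt0.
have hLc : 1 + tau * rho <= L * (tau * rho + eps).
  have := ler_wpM2r (ltW c0) HL; rewrite mulrDl mul1r divfK ?gt_eqF//.
  by move=> h; lra.
have hA' : 0 <= (L - 1) * (A - tau * rho).
  by apply: mulr_ge0; lra.
have key : L * ((1 - p) * A + p * E + eps) = (L - 1) * A + E + L * eps.
  by rewrite /p; field; rewrite gt_eqF.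
have : 0 <= L * ((1 - p) * A + p * E + eps) by rewrite key; nra.
by rewrite pmulr_rge0// => h; lra.
Qed.
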